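(* Let $n=2m-1$ be odd, fix $\boldsymbol{\rho}^0\in\mathcal{P}_n$ and $\alpha\in(0,\infty)$, and let $\mathbf{R}\sim\mathrm{Mallows}(\boldsymbol{\rho}^0,\alpha)$ with the footrule distance. For $i=1,\dots,n$ let $o^0_i$ be the item with $\rho^0_{o^0_i}=i$. Then $$\mathbb{E}[R_{o^0_m}\mid\boldsymbol{\rho}^0,\alpha]=\rho^0_{o^0_m}=m.$$
   Context: $\mathcal{P}_n$ denotes the set of permutations of $\{1,\dots,n\}$; a ranking $\mathbf{r}\in\mathcal{P}_n$ assigns rank $r_i$ to item $i$. The footrule distance is $d(\mathbf{r},\boldsymbol{\rho})=\sum_{i=1}^n|r_i-\rho_i|$. The Mallows distribution $\mathrm{Mallows}(\boldsymbol{\rho}^0,\alpha)$ on $\mathcal{P}_n$ has probability mass function $P(\mathbf{R}=\mathbf{r}\mid\boldsymbol{\rho}^0,\alpha)=\frac{1}{Z_n(\alpha)}\exp\{-\frac{\alpha}{n}d(\mathbf{r},\boldsymbol{\rho}^0)\}$ with normalizing constant $Z_n(\alpha)$. *)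

(* Defs.v *)
From mathcomp Require Import all_boot all_order all_algebra all_fingroup.
From mathcomp Require Import all_classical all_reals all_analysis.
Set Implicit Arguments. Unset Strict Implicit. Unset Printing Implicit Defensive.
Import Order.TTheory GRing.Theory Num.Theory.
Local Open Scope ring_scope.

(* Rankings of n items are permutations r : {perm 'I_n}; item i : 'I_n
   (item i+1 in the paper) gets rank (r i).+1 in {1,...,n}. *)

(* Footrule distance d(r, rho) = sum_i |r_i - rho_i| (shifting both ranks by 1
   does not change the differences). *)
Definition footrule (n : nat) (r rho : {perm 'I_n}) : nat :=
  \sum_(i < n) `|(r i)%:Z - (rho i)%:Z|%N.

Definition mallows_Z (R : realType) (n : nat) (rho0 : {perm 'I_n}) (alpha : R) : R :=
  \sum_(r : {perm 'I_n}) expR (- (alpha / n%:R) * (footrule r rho0)%:R).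

Definition mallows_pmf (R : realType) (n : nat) (rho0 : {perm 'I_n}) (alpha : R)
  (r : {perm 'I_n}) : R :=
  expR (- (alpha / n%:R) * (footrule r rho0)%:R) / mallows_Z rho0 alpha.

Definition mallows_exp_rank (R : realType) (n : nat) (rho0 : {perm 'I_n}) (alpha : R)
  (j : 'I_n) : R :=
  \sum_(r : {perm 'I_n}) mallows_pmf rho0 alpha r * ((r j).+1)%:R.

(* Main.v *)
Require Import Defs.
From mathcomp Require Import all_boot all_order all_algebra all_fingroup.
From mathcomp Require Import all_classical all_reals all_analysis.
From mathcomp Require Import zify.
Import Order.TTheory GRing.Theory Num.Theory.
Local Open Scope ring_scope.

Section Aux.
Variable n : nat.
Definition revp : {perm 'I_n} := perm (@rev_ord_inj n).
Variable rho : {perm 'I_n}.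
Definition pip : {perm 'I_n} := (rho * revp * rho^-1)%g.
Definition phi (r : {perm 'I_n}) : {perm 'I_n} := (pip * r * revp)%g.

Lemma phiE r i : phi r i = rev_ord (r (pip i)).
Proof. by rewrite /phi !permM permE. Qed.

Lemma pipE i : rho (pip i) = rev_ord (rho i).
Proof. by rewrite /pip !permM permKV permE. Qed.

Lemma phi_inj : injective phi.
Proof. by move=> r s; rewrite /phi => /mulIg /mulgI. Qed.

Lemma footrule_phi r : footrule (phi r) rho = footrule r rho.
Proof.
rewrite /footrule [RHS](reindex_inj (@perm_inj _ pip)) /=.
apply: eq_bigr => i _.
rewrite phiE pipE /=.
have h1 := ltn_ord (r (pip i)); have h2 := ltn_ord (rho i).
move: (nat_of_ord (r (pip i))) (nat_of_ord (rho i)) h1 h2 => a b ha hb.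
case: (leqP (n - a.+1) b) => h;
  [rewrite (distnEr h) | rewrite (distnEl (ltnW h))];
  (case: (leqP a (n - b.+1)) => h';
  [rewrite (distnEr h') | rewrite (distnEl (ltnW h'))]); lia.
Qed.
End Aux.

Theorem mainTheorem4 (R : realType) (k : nat) (rho0 : {perm 'I_(k.*2.+1)}) (alpha : R) :
  0 < alpha ->
  let m := k.+1 in
  let o0m := (rho0^-1)%g (inord k) in
  mallows_exp_rank rho0 alpha o0m = ((rho0 o0m).+1)%:R /\
  ((rho0 o0m).+1)%:R = m%:R :> R.
Proof.
move=> _ m o0m.
have ho : rho0 o0m = inord k by rewrite /o0m permKV.
have hk : (inord k : 'I_(k.*2.+1)) = k :> nat by rewrite inordK // ltnS -addnn leq_addr.
split; last by rewrite ho hk.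
rewrite ho hk.
set w := fun r : {perm 'I_(k.*2.+1)} =>
  expR (- (alpha / (k.*2.+1)%:R) * (footrule r rho0)%:R).
have Zpos : 0 < mallows_Z rho0 alpha.
  rewrite /mallows_Z (bigD1 1%g) //=.
  apply: ltr_pwDl; first exact: expR_gt0.
  by apply: sumr_ge0 => i _; apply/ltW/expR_gt0.
have pio : @pip _ rho0 o0m = o0m.
  apply: (@perm_inj _ rho0); rewrite pipE ho; apply: val_inj => /=.
  rewrite hk; rewrite -addnn; lia.
set S := \sum_r w r * ((r o0m).+1)%:R.
have hS : S = \sum_r w r * ((k.*2.+1)%:R + 1) - S.
  rewrite /S {1}(reindex_inj (@phi_inj _ rho0)) /= -sumrB.
  apply: eq_bigr => r _.
  rewrite /w footrule_phi phiE pio -mulrBr; congr (_ * _).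
  have h1 := ltn_ord (r o0m).
  rewrite natr1 -natrB; last by lia.
  by congr (_%:R); rewrite /=; lia.
rewrite /mallows_exp_rank.
have -> : \sum_r mallows_pmf rho0 alpha r * ((r o0m).+1)%:R = S / mallows_Z rho0 alpha.
  rewrite /S mulr_suml; apply: eq_bigr => r _.
  by rewrite /mallows_pmf /w mulrAC.
have hS2 : S *+ 2 = mallows_Z rho0 alpha * ((k.*2.+1)%:R + 1).
  by rewrite mulr2n {1}hS -mulr_suml subrK.
apply: (@mulIf _ (mallows_Z rho0 alpha *+ 2)).
  by rewrite mulrn_eq0 negb_or /= gt_eqF.
rewrite !mulrnAr divfK ?gt_eqF // hS2 mulrC -mulrnAl; congr (_ * _).
rewrite natr1 mulr2n -natrD; apply: f_equal; by rewrite -addnn addnS addSn.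
Qed.
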